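(* Let $R$ be the ring of integers of a nonarchimedean local field $F$ of characteristic not $2$ in which $2$ is a prime element of $R$. For every positive integer $n$, the minimal rank of an even $R$-lattice that primitively represents all even $R$-lattices of rank $n$ is exactly $2n$.
   Context: An $R$-lattice is a finitely generated $R$-submodule $L$ of a quadratic space $(V,B)$ over $F$ with $Q(v)=B(v,v)$, assumed integral ($B(L,L)\subseteq R$) and nondegenerate. $L$ is even if $Q(L)\subseteq 2R$. A representation of $L$ into $M$ is an $R$-linear map preserving $B$; it is primitive if its image is a direct summand of $M$. *)

(* Defs.v *)
From HB Require Import structures.
From mathcomp Require Import all_boot all_order all_algebra.
Set Implicit Arguments. Unset Strict Implicit. Unset Printing Implicit Defensive.
Import Order.TTheory GRing.Theory Num.Theory.
Local Open Scope ring_scope.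

Section Defs.
Variable R : idomainType.

Definition rdvd (a b : R) : Prop := exists w : R, b = a * w.

(* R is the ring of integers of a nonarchimedean local field F (= Frac R)
   of characteristic <> 2 in which 2 is a prime element of R:
   R is a complete discrete valuation ring with uniformizer 2 and finite
   residue field. *)
Definition uniformizer2 : Prop :=
  (2 : R) != 0 /\ (2 : R) \isn't a GRing.unit /\
  forall x : R, x != 0 ->
    exists (u : R) (k : nat), u \is a GRing.unit /\ x = u * 2 ^+ k.

Definition finite_residue_field : Prop :=
  exists s : seq R, forall x : R, exists2 y, y \in s & rdvd 2 (x - y).

Definition complete2 : Prop :=
  forall x : nat -> R, (forall k, rdvd (2 ^+ k) (x k.+1 - x k)) ->
    exists y : R, forall k, rdvd (2 ^+ k) (y - x k).

Definition local_int_ring_2_prime : Prop :=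
  [/\ uniformizer2, finite_residue_field & complete2].

(* An R-lattice of rank n is given (up to isometry) by its Gram matrix
   G = (B(e_i, e_j)) in a basis e_1..e_n (R is a PID, lattices are free). *)
Definition integral_nondeg_lattice n (G : 'M[R]_n) : Prop :=
  G^T = G /\ \det G != 0.

Definition Qform n (G : 'M[R]_n) (v : 'rV[R]_n) : R := (v *m G *m v^T) 0 0.

Definition even_lattice n (G : 'M[R]_n) : Prop :=
  integral_nondeg_lattice G /\ forall v : 'rV[R]_n, rdvd 2 (Qform G v).

(* A representation L -> M: the R-linear map a |-> a *m X (rows of X are
   the images of the basis of L) preserving B. *)
Definition represents_by n m (A : 'M[R]_n) (G : 'M[R]_m) (X : 'M[R]_(n, m)) :=
  X *m G *m X^T = A.

Definition is_submodule m (N : 'rV[R]_m -> Prop) : Prop :=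
  [/\ N 0, (forall u v, N u -> N v -> N (u + v)) & (forall r u, N u -> N (r *: u))].

Definition image_direct_summand n m (X : 'M[R]_(n, m)) : Prop :=
  exists N : 'rV[R]_m -> Prop,
    [/\ is_submodule N,
        (forall b : 'rV[R]_m, exists (a : 'rV[R]_n) (c : 'rV[R]_m), N c /\ b = a *m X + c)
      & (forall a : 'rV[R]_n, N (a *m X) -> a *m X = 0)].

Definition prim_represents n m (A : 'M[R]_n) (G : 'M[R]_m) : Prop :=
  exists X : 'M[R]_(n, m), represents_by A G X /\ image_direct_summand X.

End Defs.

(* Main.v *)
Require Import Defs.
From HB Require Import structures.
From mathcomp Require Import all_boot all_order all_algebra.
From mathcomp Require Import zify.
Import GRing.Theory.
Local Open Scope ring_scope.

Lemma det_cong (R : idomainType) n (a c : R) (S : 'M[R]_n) :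
  exists r, \det (a%:M - c *: S) = a ^+ n + c * r.
Proof.
pose M : 'M[{poly R}]_n := \matrix_(i, j) (((a%:M : 'M[R]_n) i j)%:P - 'X * (S i j)%:P).
pose p := \det M.
have ev : forall x, p.[x] = \det (a%:M - x *: S).
  move=> x; rewrite -horner_evalE. rewrite -det_map_mx. congr (\det _).
  apply/matrixP => i j; rewrite !mxE /= horner_evalE !hornerE //.
have p0 : p.[0] = a ^+ n by rewrite ev scale0r subr0 det_scalar.
have : root (p - (p.[0])%:P) 0 by rewrite /root !hornerE subrr.
case/factor_theorem => q hq.
exists q.[c].
have : (p - p.[0]%:P).[c] = (q * ('X - 0%:P)).[c] by rewrite hq.
rewrite !hornerE ev p0 subr0 => /eqP; rewrite subr_eq => /eqP ->.
by rewrite addrC mulrC.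
Qed.

Lemma part2 (R : idomainType) (hu : uniformizer2 R) n m (G : 'M[R]_m)
  (hG : even_lattice G)
  (hrep : forall A : 'M[R]_n, even_lattice A -> prim_represents A G) :
  (2 * n <= m)%N.
Proof.
case: hu => h20 [h2nu hfac].
case: hG => [[sG dG] eG].
rewrite leqNgt; apply/negP => hlt.
set d := \det G.
have dn0 : d ^+ n != 0 by rewrite expf_neq0.
have [u [j [uu ud]]] := hfac _ dn0.
set c : R := 2 ^+ j.+1.
have c0 : c != 0 by rewrite expf_neq0.
pose A : 'M[R]_n := c%:M.
have eA : even_lattice A.
  split; [split|].
  - by rewrite tr_scalar_mx.
  - by rewrite det_scalar expf_neq0.
  - move=> v; exists (2 ^+ j * (v *m v^T) 0 0).
    by rewrite /Qform /A mul_mx_scalar -scalemxAl mxE /c exprS mulrA.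
have [X [rX [N [[N0 ND NZ] dec inj]]]] := hrep A eA.
have Xinj : forall a : 'rV_n, a *m X = 0 -> a = 0.
  move=> a ha; have : a *m A = 0 by rewrite -rX !mulmxA ha !mul0mx.
  by rewrite /A mul_mx_scalar => /eqP; rewrite scalemx_eq0 (negbTE c0) /= => /eqP.
have : forall jj : 'I_m, exists a : 'rV[R]_n, N (delta_mx 0 jj - a *m X).
  move=> jj; have [a [cc [Nc e]]] := dec (delta_mx 0 jj).
  by exists a; rewrite e addrAC subrr add0r.
case/fin_all_exists => a ha.
pose Y : 'M[R]_(m, n) := \matrix_(i < m) a i.
have NS : forall (I : finType) (F : I -> 'rV_m), (forall i, N (F i)) -> N (\sum_i F i).
  by move=> I F hF; apply: big_ind.
have decY : forall b : 'rV_m, N (b - b *m Y *m X).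
  move=> b; rewrite {1 2}(row_sum_delta b) mulmx_suml mulmx_suml -sumrB.
  apply: NS => i; rewrite -scalemxAl -scalemxAl -scalerBr; apply: NZ.
  by rewrite -rowE rowK.
have XY : X *m Y = 1%:M.
  apply/row_matrixP => i; rewrite !rowE; set e := delta_mx 0 i.
  have : N ((e - e *m X *m Y) *m X) by rewrite mulmxBl; exact: decY.
  move/inj/Xinj => /eqP; rewrite subr_eq0 => /eqP.
  by rewrite mulmx1 mulmxA.
set P := 1%:M - Y *m X.
set M := G *m X^T.
have e1 : Y^T *m \adj G *m M = d%:M.
  rewrite /M !mulmxA -(mulmxA _ (\adj G) G) mul_adj_mx mul_mx_scalar -scalemxAl.
  by rewrite -trmx_mul XY trmx1 scalemx1.
have XM : X *m M = A by rewrite /M mulmxA rX.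
have e2 : M = c *: Y + P *m M.
  by rewrite /P mulmxBl mul1mx -mulmxA XM /A mul_mx_scalar addrC subrK.
have key : d%:M = c *: (Y^T *m \adj G *m Y) + Y^T *m \adj G *m P *m M.
  by rewrite -e1 {1}e2 mulmxDr scalemxAr mulmxA.
set Q := Y^T *m \adj G *m P *m M.
have dQ : \det Q = 0.
  pose f := @tofrac R.
  have XYf : map_mx f X *m map_mx f Y = 1%:M by rewrite -map_mxM XY map_mx1.
  have PYf : map_mx f P *m map_mx f Y = 0.
    by rewrite /P map_mxB map_mx1 mulmxBl mul1mx map_mxM -mulmxA XYf mulmx1 subrr.
  have rY : (n <= \rank (map_mx f Y))%N.
    by have := mxrankM_maxr (map_mx f X) (map_mx f Y); rewrite XYf mxrank1.
  have rP : (\rank (map_mx f P) + n <= m)%N.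
    have := mxrank_mul_min (map_mx f P) (map_mx f Y); rewrite PYf mxrank0.
    lia.
  have rQ : (\rank (map_mx f Q) <= \rank (map_mx f P))%N.
    rewrite /Q !map_mxM.
    exact: leq_trans (mxrankM_maxl _ _) (mxrankM_maxr _ _).
  have hdet : \det (map_mx f Q) = f (\det Q) by exact: det_map_mx.
  apply/eqP; rewrite -(tofrac_eq0 (\det Q)) -/f -hdet.
  apply: contraT => hQ.
  have : map_mx f Q \in unitmx by rewrite unitmxE unitfE.
  move/mxrank_unit => e.
  lia.
have [r hr] := @det_cong R n d c (Y^T *m \adj G *m Y).
have hQ : Q = d%:M - c *: (Y^T *m \adj G *m Y) by rewrite key addrAC subrr add0r.
have : 2 ^+ j * (u + 2 * r) = 0.
  rewrite mulrDr mulrC -ud mulrA -exprSr -/c -hr -hQ; exact: dQ.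
move/eqP; rewrite mulf_eq0 expf_eq0 (negbTE h20) andbF /= addr_eq0 => /eqP hu2.
by move: uu; rewrite hu2 unitrN unitrM (negbTE h2nu).
Qed.
Lemma Qform_delta (R : idomainType) n (A : 'M[R]_n) i : Qform A (delta_mx 0 i) = A i i.
Proof.
by rewrite /Qform -rowE trmx_delta -colE !mxE.
Qed.

Lemma part1 (R : idomainType) (n : nat) :
  exists G : 'M[R]_(n + n),
      even_lattice G /\
      forall A : 'M[R]_n, even_lattice A -> prim_represents A G.
Proof.
pose G : 'M[R]_(n + n) := block_mx 0 1%:M 1%:M 0.
have GG : G *m G = 1%:M.
  by rewrite mulmx_block !mulmx0 !mul0mx !mulmx1 !add0r !addr0 -scalar_mx_block.
exists G; split.
  split; [split|].
  - by rewrite /G tr_block_mx !trmx0 trmx1.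
  - apply/negP => /eqP d0.
    have := congr1 determinant GG.
    by rewrite det_mulmx d0 mul0r det1 => /eqP; rewrite eq_sym oner_eq0.
  - move=> v; rewrite -(hsubmxK v); set v1 := lsubmx v; set v2 := rsubmx v.
    exists ((v2 *m v1^T) 0 0).
    rewrite /Qform /G mul_row_block !mulmx0 !mulmx1 !add0r addr0 tr_row_mx mul_row_col.
    rewrite mxE.
    have -> : v1 *m v2^T = (v2 *m v1^T)^T by rewrite trmx_mul trmxK.
    by rewrite [X in _ + X]mxE mulr_natl mulr2n.
move=> A [[sA _] eA].
have : forall i : 'I_n, exists w : R, A i i = 2 * w.
  by move=> i; have [w hw] := eA (delta_mx 0 i); exists w; rewrite -Qform_delta.
case/fin_all_exists => w hw.
pose B : 'M[R]_n := \matrix_(i, j) (if (i < j)%N then A i j else if i == j then w i else 0).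
have BB : B + B^T = A.
  apply/matrixP => i j; rewrite !mxE.
  case: (ltngtP i j) => [lij|lji|eij].
  - rewrite (_ : (j == i) = false) ?addr0 //.
    by apply/eqP => e; rewrite e ltnn in lij.
  - rewrite (_ : (i == j) = false) ?add0r; last first.
      by apply/eqP => e; rewrite e ltnn in lji.
    by rewrite -[in RHS]sA mxE.
  - have e : i = j by apply: val_inj.
    by rewrite e eqxx hw mulr_natl mulr2n.
exists (row_mx 1%:M B); split.
  rewrite /represents_by /G mul_row_block !mulmx0 !mulmx1 !addr0 !add0r ?mul1mx.

  by rewrite tr_row_mx mul_row_col trmx1 mulmx1 mul1mx BB.
exists (fun c : 'rV[R]_(n + n) => lsubmx c = 0); split.
- split.
  + by rewrite linear0.
  + by move=> u v hu hv; rewrite linearD /= hu hv addr0.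
  + by move=> r u hu; rewrite linearZ /= hu scaler0.
- move=> b; exists (lsubmx b), (b - lsubmx b *m row_mx 1%:M B); split.
    by rewrite linearB /= mul_mx_row row_mxKl mulmx1 subrr.
  by rewrite addrC subrK.
- by move=> a; rewrite mul_mx_row row_mxKl mulmx1 => ->; rewrite mul0mx row_mx0.
Qed.

Theorem mainTheorem4 (R : idomainType) (hR : local_int_ring_2_prime R)
    (n : nat) (hn : (0 < n)%N) :
  (exists G : 'M[R]_(2 * n),
      even_lattice G /\
      forall A : 'M[R]_n, even_lattice A -> prim_represents A G)
  /\
  (forall (m : nat) (G : 'M[R]_m),
      even_lattice G ->
      (forall A : 'M[R]_n, even_lattice A -> prim_represents A G) ->
      (2 * n <= m)%N).
Proof.
case: hR => hu _ _.
split; last by move=> m G hG hrep; exact: (@part2 R hu n m G hG hrep).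
have e : (2 * n = n + n)%N by rewrite mul2n addnn.
rewrite e; exact: part1.
Qed.
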